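(* Let $m,n,d,e$ be positive integers with $m=2n$ and $e=\gcd(n,d)=\gcd(m,d)$, and let $s\ge u\ge2$ be integers. Then \[|V_{s,u,\{0\}}|=2^{eu(u+1)/2}\prod_{i=0}^{u-1}(2^m-2^{ei}).\]
   Context: For integers $s\ge0$ and $u\ge1$, $V_{s,u}$ denotes the set of solutions $(x_1,\dots,x_{2u})\in\mathbb{F}_{2^m}^{2u}$ of the system \[\sum_{i=1}^u\big(x_{2i-1}x_{2i}^{2^{(\frac{n}{e}-j)d}}+x_{2i-1}^{2^{(\frac{n}{e}-j)d}}x_{2i}\big)=0,\qquad j=0,1,\dots,s.\] $V_{s,u,\{0\}}$ is the set of $(x_1,\dots,x_{2u})\in V_{s,u}$ such that $x_2,x_4,\dots,x_{2u}$ are linearly independent over $\mathbb{F}_{2^e}$. Equivalently, $\{(c_1,\dots,c_u)\in\mathbb{F}_{2^e}^u\mid\sum_i c_ix_{2i}=0\}=\{0\}$. *)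

(* Defs.v *)
From HB Require Import structures.
From mathcomp Require Import all_boot all_order all_algebra all_field.
From mathcomp Require Import zify.
Set Implicit Arguments. Unset Strict Implicit. Unset Printing Implicit Defensive.
Import GRing.Theory Num.Theory.
Local Open Scope ring_scope.

(* Frobenius power x |-> x^(2^k) on a field of order 2^m, for an integer k;
   since this automorphism has order dividing m, k is taken modulo m
   (for k >= 0 this is literally x^(2^k)). *)
Definition frob2 (F : finFieldType) (m : nat) (k : int) (x : F) : F :=
  x ^+ (2 ^ `|(k %% (m : int))%Z|%N)%N.

(* Coordinates of x = (x_1,...,x_{2u}) stored 0-based: x_{2i+1} is x (2i),
   x_{2i+2} is x (2i+1), for i < u. *)
Lemma ord_odd_lt (u : nat) (i : 'I_u) : (2 * i < 2 * u)%N.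
Proof. have := ltn_ord i; lia. Qed.
Lemma ord_even_lt (u : nat) (i : 'I_u) : (2 * i + 1 < 2 * u)%N.
Proof. have := ltn_ord i; lia. Qed.
Definition xodd (F : finFieldType) (u : nat) (x : {ffun 'I_(2 * u) -> F}) (i : 'I_u) : F :=
  x (Ordinal (ord_odd_lt i)).
Definition xeven (F : finFieldType) (u : nat) (x : {ffun 'I_(2 * u) -> F}) (i : 'I_u) : F :=
  x (Ordinal (ord_even_lt i)).

Definition inV (F : finFieldType) (m n d e s u : nat) (x : {ffun 'I_(2 * u) -> F}) : bool :=
  [forall j : 'I_s.+1,
    \sum_(i < u)
      (xodd x i * frob2 m ((((n %/ e)%N : int) - (j : int)) * (d : int)) (xeven x i)
       + frob2 m ((((n %/ e)%N : int) - (j : int)) * (d : int)) (xodd x i) * xeven x i) == 0].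

(* x_2, x_4, ..., x_{2u} linearly independent over the subfield F_{2^e}
   = { c in F | c^(2^e) = c }: the only (c_1..c_u) in F_{2^e}^u with
   sum_i c_i x_{2i} = 0 is 0. *)
Definition indep_sub (F : finFieldType) (e u : nat) (x : {ffun 'I_(2 * u) -> F}) : bool :=
  [forall c : {ffun 'I_u -> F},
    ([forall i, c i ^+ (2 ^ e)%N == c i] && (\sum_(i < u) c i * xeven x i == 0))
      ==> [forall i, c i == 0]].

Definition V0 (F : finFieldType) (m n d e s u : nat) : {set {ffun 'I_(2 * u) -> F}} :=
  [set x | inV m n d e s x && indep_sub e x].

(* Main.v *)
Require Import Defs.
From HB Require Import structures.
From mathcomp Require Import all_boot all_order all_algebra all_field.
From mathcomp Require Import zify ring.
Import GRing.Theory Num.Theory.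
Set Implicit Arguments. Unset Strict Implicit. Unset Printing Implicit Defensive.
Local Open Scope ring_scope.

Section Char2.
Variable R : comNzRingType.
Hypothesis two0 : (2%:R : R) = 0.

Lemma c2_addrr (x : R) : x + x = 0.
Proof. by rewrite -mulr2n -mulr_natr two0 mulr0. Qed.

Lemma c2_opp (x : R) : - x = x.
Proof. by apply/eqP; rewrite eq_sym -subr_eq0 opprK c2_addrr. Qed.

Lemma c2_add_eq0 (x y : R) : (x + y == 0) = (x == y).
Proof. by rewrite -{1}(c2_opp y) subr_eq0. Qed.

Lemma c2_expD (a : nat) (x y : R) : (x + y) ^+ (2 ^ a) = x ^+ (2 ^ a) + y ^+ (2 ^ a).
Proof.
elim: a => [|a IH]; first by rewrite !expr1.
rewrite expnS mulnC !exprM IH sqrrD.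
rewrite mulr2n.
by rewrite c2_addrr addr0.
Qed.
End Char2.

Section Frob.
Variables (F : finFieldType) (m : nat).
Hypothesis cardF : #|F| = (2 ^ m)%N.
Hypothesis m_gt0 : (0 < m)%N.

Lemma two0F : (2%:R : F) = 0.
Proof. by have /andP[_ /eqP] := card_finPcharP cardF (isT : prime 2). Qed.

Definition fr (a : nat) (x : F) := x ^+ (2 ^ a).

Lemma frD a x y : fr a (x + y) = fr a x + fr a y.
Proof. by rewrite /fr (c2_expD two0F). Qed.
Lemma frM a x y : fr a (x * y) = fr a x * fr a y.
Proof. exact: exprMn. Qed.
Lemma fr0 a : fr a 0 = 0.
Proof. by rewrite /fr expr0n expn_eq0. Qed.
Lemma fr1 a : fr a 1 = 1.
Proof. by rewrite /fr expr1n. Qed.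
Lemma frA a b x : fr a (fr b x) = fr (a + b) x.
Proof. by rewrite /fr -exprM -expnD addnC. Qed.
Lemma fr_0 x : fr 0 x = x.
Proof. by rewrite /fr expr1. Qed.
Lemma fr_m x : fr m x = x.
Proof. by rewrite /fr -cardF expf_card. Qed.
Lemma fr_mulm k x : fr (k * m) x = x.
Proof. elim: k => [|k IH]; first exact: fr_0. by rewrite mulSn -frA IH fr_m. Qed.
Lemma fr_mod a x : fr a x = fr (a %% m) x.
Proof. by rewrite {1}(divn_eq a m) addnC -frA fr_mulm. Qed.
Lemma fr_inj a : injective (fr a).
Proof.
move=> x y E.
have H z : fr (a * m - a) (fr a z) = z.
  by rewrite frA subnK ?fr_mulm // leq_pmulr.
by rewrite -(H x) E H.
Qed.
Lemma frN a x : fr a (- x) = - fr a x.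
Proof. by rewrite !(c2_opp two0F). Qed.
Lemma frB a x y : fr a (x - y) = fr a x - fr a y.
Proof. by rewrite frD frN. Qed.
Lemma fr_sum a (I : finType) (P : pred I) (f : I -> F) :
  fr a (\sum_(i | P i) f i) = \sum_(i | P i) fr a (f i).
Proof. exact: (big_morph _ (frD a) (fr0 a)). Qed.
Lemma frV a x : fr a (x^-1) = (fr a x)^-1.
Proof. exact: exprVn. Qed.

Lemma fr_fix_mul a k x : fr a x = x -> fr (a * k) x = x.
Proof. move=> H; elim: k => [|k IH]; first by rewrite muln0 fr_0. by rewrite mulnS -frA IH H. Qed.

Lemma fr_fix_sub a b x : fr a x = x -> fr (a + b) x = x -> fr b x = x.
Proof. by move=> Ha; rewrite addnC -frA Ha. Qed.

Lemma fr_fix_gcd d x : fr m x = x -> fr d x = x -> fr (gcdn m d) x = x.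
Proof.
move=> Hm Hd; have [a _ /dvdnP[c Hc]] := Bezoutl d m_gt0.
apply: (fr_fix_sub (b := gcdn m d) (a := a * d)); first by rewrite mulnC fr_fix_mul.
by rewrite addnC Hc mulnC fr_fix_mul.
Qed.

Lemma frob2E (k : int) (x : F) : frob2 m k x = fr `|(k %% (m : int))%Z|%N x.
Proof. by []. Qed.

Lemma frob2_nat (a : nat) (x : F) : frob2 m a x = fr a x.
Proof. by rewrite frob2E modz_nat absz_nat -fr_mod. Qed.

Lemma frob2_cong (a b : int) (x : F) : (m %| a - b)%Z -> frob2 m a x = frob2 m b x.
Proof. by rewrite -eqz_mod_dvd => /eqP E; rewrite !frob2E E. Qed.

Lemma modz_absE (a : int) : (`|(a %% (m : int))%Z|%N : int) = (a %% (m : int))%Z.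
Proof. by rewrite gez0_abs // modz_ge0 // eqz_nat -lt0n. Qed.

Lemma frob2_comp (a b : int) (x : F) : frob2 m a (frob2 m b x) = frob2 m (a + b) x.
Proof.
rewrite [frob2 m a _]frob2E [frob2 m b _]frob2E frA -frob2_nat.
apply: frob2_cong; rewrite PoszD !modz_absE.
have Ea := divz_eq a m; have Eb := divz_eq b m.
set A := (a %% m)%Z in Ea *; set B := (b %% m)%Z in Eb *.
set Qa := (a %/ m)%Z in Ea; set Qb := (b %/ m)%Z in Eb.
have -> : A + B - (a + b) = (- (Qa + Qb)) * m by rewrite {1}Ea {1}Eb; ring.
by rewrite dvdz_mull.
Qed.

Lemma frob2_0 (x : F) : frob2 m 0 x = x.
Proof. by rewrite (frob2_nat 0) fr_0. Qed.

End Frob.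
Section KCard.
Variables (F : finFieldType) (m e : nat).
Hypothesis cardF : #|F| = (2 ^ m)%N.
Hypothesis m_gt0 : (0 < m)%N.
Hypothesis e_gt0 : (0 < e)%N.
Hypothesis e_dvd_m : (e %| m)%N.

Definition Kset : {set F} := [set c : F | c ^+ (2 ^ e) == c].

Lemma two0P : (2%:R : {poly F}) = 0.
Proof. by rewrite -polyC_natr (two0F cardF) polyC0. Qed.

Lemma size_XnX n : (2 <= n)%N -> size ('X^n + 'X : {poly F}) = n.+1.
Proof. by move=> H; rewrite size_addl size_polyXn // size_polyX. Qed.

Lemma card_Kset : #|Kset| = (2 ^ e)%N.
Proof.
set q := (2 ^ e)%N.
have q2 : (2 <= q)%N by rewrite /q -{1}(expn1 2) leq_exp2l.
set P : {poly F} := 'X^q + 'X.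
have divP k : P %| 'X^(q ^ k) + 'X.
  elim: k => [|k IH]; first by rewrite expn0 expr1 (c2_addrr two0P) dvdp0.
  have -> : 'X^(q ^ k.+1) + 'X = ('X^(q ^ k) + 'X) ^+ q + P.
    rewrite /q (c2_expD two0P) -/q -exprM -expnSr /P addrA -[_ + 'X^q]addrA.
    by rewrite [_ + 'X^q](c2_addrr two0P) addr0.
  by apply: dvdp_add (dvdpp P); apply: dvdp_exp IH; rewrite expn_gt0.
set Z : {poly F} := 'X^(2 ^ m) + 'X.
have PZ : P %| Z.
  by rewrite /Z -(divnK e_dvd_m) mulnC expnM; apply: divP.
have m2 : (2 <= 2 ^ m)%N by rewrite -{1}(expn1 2) leq_exp2l.
have sZ : size Z = (2 ^ m).+1 by rewrite size_XnX.
have sP : size P = q.+1 by rewrite size_XnX.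
set Q := Z %/ P.
have EZ : Q * P = Z by rewrite divpK.
have Z0 : Z != 0 by rewrite -size_poly_eq0 sZ.
have P0 : P != 0 by rewrite -size_poly_eq0 sP.
have Q0 : Q != 0 by apply: contraNneq Z0 => Q0; rewrite -EZ Q0 mul0r.
have sQ : (size Q + q = (2 ^ m).+1)%N.
  by move: (size_mul Q0 P0); rewrite EZ sZ sP addnS /= => ->.
set RQ := [set c : F | root Q c].
have cRQ : (#|RQ| < size Q)%N.
  rewrite cardE; apply: max_poly_roots Q0 _ (enum_uniq _).
  by apply/allP => c; rewrite mem_enum inE.
have cK : (#|Kset| < size P)%N.
  rewrite cardE; apply: max_poly_roots P0 _ (enum_uniq _).
  apply/allP => c; rewrite mem_enum inE /root /P !hornerE.
  by rewrite (c2_add_eq0 (two0F cardF)).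
have cU : [set: F] = Kset :|: RQ.
  apply/setP => c; rewrite !inE; apply/esym.
  have : root Z c by rewrite /root /Z !hornerE -cardF expf_card (c2_addrr (two0F cardF)).
  by rewrite -EZ rootM /root /P !hornerE (c2_add_eq0 (two0F cardF)) orbC.
have := cardsU Kset RQ; rewrite -cU cardsT cardF => H.
lia.
Qed.

End KCard.
Section Moore.
Variables (F : finFieldType) (m d e : nat).
Hypothesis cardF : #|F| = (2 ^ m)%N.
Hypothesis m_gt0 : (0 < m)%N.
Hypothesis He : e = gcdn m d.

Local Notation fr := (@fr F).

Lemma e_dvd_d : (e %| d)%N. Proof. by rewrite He dvdn_gcdr. Qed.
Lemma e_dvd_m' : (e %| m)%N. Proof. by rewrite He dvdn_gcdl. Qed.

Lemma fixK (c : F) : (fr d c = c) <-> (fr e c = c).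
Proof.
split=> H.
  by rewrite He; apply: fr_fix_gcd => //; apply: fr_m.
by rewrite -(divnK e_dvd_d) mulnC fr_fix_mul.
Qed.

Lemma frK k (c : F) : fr e c = c -> fr (d * k) c = c.
Proof. by move=> /fixK H; rewrite fr_fix_mul. Qed.

Definition indep (I : finType) (S : {set I}) (b : I -> F) : Prop :=
  forall c : I -> F, (forall p, p \in S -> fr e (c p) = c p) ->
    \sum_(p in S) c p * b p = 0 -> forall p, p \in S -> c p = 0.

Lemma sum_subset (I : finType) (S T : {set I}) (f : I -> F) : T \subset S ->
  \sum_(p in S) (if p \in T then f p else 0) = \sum_(p in T) f p.
Proof.
move=> sub; rewrite -big_mkcondr; apply: eq_bigl => p.
by apply: andb_idl => /(subsetP sub).
Qed.

Lemma indep_subset (I : finType) (S T : {set I}) b : T \subset S -> indep S b -> indep T b.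
Proof.
move=> sub H c cK c0 p pT.
suff: (if p \in T then c p else 0) = 0 by rewrite pT.
apply: (H (fun p => if p \in T then c p else 0)).
- by move=> q _; case: ifP => // qT; [apply: cK | rewrite fr0].
- rewrite -[RHS]c0 -(@sum_subset _ S T (fun q => c q * b q)) //; apply: eq_bigr => q _; case: ifP => //; by rewrite mul0r.
- exact: (subsetP sub).
Qed.

Lemma moore (I : finType) N : forall k0 (S : {set I}) (a b : I -> F),
  (#|S| <= N)%N -> indep S b ->
  (forall k, (k0 <= k < k0 + N)%N -> \sum_(p in S) a p * fr (d * k) (b p) = 0) ->
  forall p, p \in S -> a p = 0.
Proof.
elim: N => [|N IH] k0 S a b cS Hind Heq.
  move: cS; rewrite leqn0 cards_eq0 => /eqP -> p; by rewrite inE.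
case: (boolP [forall p in S, a p == 0]) => [/forall_inP H p /H /eqP //|].
move=> /forall_inPn [p0 p0S ap0].
pose a' p := a p / a p0.
have a'p0 : a' p0 = 1 by rewrite /a' divff.
have Heq' k : (k0 <= k < k0 + N.+1)%N -> \sum_(p in S) a' p * fr (d * k) (b p) = 0.
  move=> Hk; have := Heq k Hk => E.
  have -> : \sum_(p in S) a' p * fr (d * k) (b p) = (\sum_(p in S) a p * fr (d * k) (b p)) / a p0.
    by rewrite mulr_suml; apply: eq_bigr => p _; rewrite /a' mulrAC.
  by rewrite E mul0r.
pose c p := a' p - fr d (a' p).
have cp0 : c p0 = 0 by rewrite /c a'p0 fr1 subrr.
have IHc := IH k0.+1 (S :\ p0) c b.
have cS' : (#|S :\ p0| <= N)%N by move: cS; rewrite (cardsD1 p0) p0S.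
have indS' : indep (S :\ p0) b by apply: indep_subset Hind; apply: subsetDl.
have Hc : forall k, (k0.+1 <= k < k0.+1 + N)%N -> \sum_(p in S :\ p0) c p * fr (d * k) (b p) = 0.
  move=> k /andP [k1 k2].
  have: \sum_(p in S) c p * fr (d * k) (b p) = 0.
    have E1 : \sum_(p in S) a' p * fr (d * k) (b p) = 0 by apply: Heq'; apply/andP; split; lia.
    have E2 : \sum_(p in S) fr d (a' p) * fr (d * k) (b p) = 0.
      have -> : \sum_(p in S) fr d (a' p) * fr (d * k) (b p) =
                fr d (\sum_(p in S) a' p * fr (d * k.-1) (b p)).
        rewrite (fr_sum cardF); apply: eq_bigr => p _; rewrite frM frA.
        by congr (_ * fr _ _); rewrite -mulnS prednK //; lia.
      by rewrite Heq' ?fr0 //; apply/andP; split; lia.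
    transitivity (\sum_(p in S) a' p * fr (d * k) (b p) - \sum_(p in S) fr d (a' p) * fr (d * k) (b p));
      last by rewrite E1 E2 subrr.
    rewrite -sumrB; apply: eq_bigr => p _.
    by rewrite /c mulrBl.
  by rewrite (big_setD1 p0) //= cp0 mul0r add0r.
have cz p : p \in S -> fr e (a' p) = a' p.
  move=> pS; case: (eqVneq p p0) => [->|pp0]; first by rewrite a'p0 fr1.
  apply/fixK; apply/esym/eqP; rewrite -subr_eq0; apply/eqP.
  by apply: (IHc cS' indS' Hc); rewrite !inE pp0.
have S0 : \sum_(p in S) a' p * b p = 0.
  apply: (@fr_inj F m cardF m_gt0 (d * k0)); rewrite fr0 (fr_sum cardF) -[RHS](Heq' k0); last by apply/andP; split; lia.
  by apply: eq_bigr => p pS; rewrite frM frK // cz.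
have := Hind a' cz S0 p0 p0S; rewrite a'p0 => /eqP; by rewrite oner_eq0.
Qed.


Definition indepb (I : finType) (S : {set I}) (b : I -> F) : bool :=
  [forall c : {ffun I -> F}, ([forall p in S, fr e (c p) == c p] &&
      (\sum_(p in S) c p * b p == 0)) ==> [forall p in S, c p == 0]].

Lemma indepbP (I : finType) (S : {set I}) (b : I -> F) : reflect (indep S b) (indepb S b).
Proof.
apply: (iffP forallP) => [H c cK c0 p pS | H c].
  have := H [ffun q => c q].
  have -> : [forall p in S, fr e ([ffun q => c q] p) == [ffun q => c q] p].
    by apply/forall_inP => q qS; rewrite ffunE cK.
  have -> : \sum_(p in S) [ffun q => c q] p * b p == 0.
    by rewrite -[X in _ == X]c0; apply/eqP/eq_bigr => q _; rewrite ffunE.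
  by move=> /forall_inP /(_ p pS); rewrite ffunE => /eqP.
apply/implyP => /andP [/forall_inP cK /eqP c0]; apply/forall_inP => p pS.
by apply/eqP; apply: (H c) => // q qS; apply/eqP/cK.
Qed.

Lemma span_or_indep (I : finType) (S : {set I}) (b : I -> F) q :
  indep S b -> q \notin S -> ~~ indepb (q |: S) b ->
  exists g : I -> F, (forall p, p \in S -> fr e (g p) = g p) /\ b q = \sum_(p in S) g p * b p.
Proof.
move=> Hind qS /forallPn [c]; rewrite negb_imply => /andP [/andP [/forall_inP cK /eqP c0]].
move=> /forall_inPn [p pS' cp].
have cq : c q != 0.
  apply/negP => /eqP cq; suff: c p = 0 by move/eqP; rewrite (negbTE cp).
  have c0' : \sum_(p in S) c p * b p = 0 by move: c0; rewrite big_setU1 //= cq mul0r add0r.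
  move: pS'; rewrite !inE => /orP [/eqP ->|pS] //.
  by apply: (Hind c) => // r rS; apply/eqP/cK; rewrite !inE rS orbT.
exists (fun p => - c p / c q); split.
  move=> r rS; rewrite frM (frN cardF) frV.
  have -> : fr e (c r) = c r by apply/eqP/cK; rewrite !inE rS orbT.
  by have -> : fr e (c q) = c q by apply/eqP/cK; rewrite !inE eqxx.
move: c0; rewrite big_setU1 //= => /eqP; rewrite addr_eq0 => /eqP E.
have -> : b q = (c q * b q) / c q by rewrite mulrC mulrA mulVf // mul1r.
rewrite E mulNr mulr_suml -sumrN; apply: eq_bigr => r _.
by rewrite !mulNr mulrAC.
Qed.

Lemma fiber_sym (u : nat) (y x : 'I_u -> F) k0 :
  indep [set: 'I_u] y ->
  (forall k, (k0 <= k < k0 + (u + u))%N ->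
     \sum_i (x i * fr (d * k) (y i) + fr (d * k) (x i) * y i) = 0) ->
  exists A : 'I_u -> 'I_u -> F, (forall i l, fr e (A i l) = A i l) /\
     (forall i l, A i l = A l i) /\ (forall i, x i = \sum_l A i l * y l).
Proof.
move=> Hy Heq.
pose I := ('I_u + 'I_u)%type.
pose b (p : I) := match p with inl i => y i | inr i => x i end.
pose a (p : I) := match p with inl i => x i | inr i => y i end.
pose Y : {set I} := [set p : I | if p is inl _ then true else false].
have YS : indepb Y b.
  apply/indepbP => c cK c0 p pY.
  have Hc := Hy (fun i => c (inl i)).
  move: pY; rewrite inE; case: p => // i _; apply: Hc => // [j _|]; first by apply: cK; rewrite inE.
  rewrite -[RHS]c0 (big_sumType _ (fun p => p \in Y)) /= [X in _ + X]big_pred0 ?addr0; last by move=> j; rewrite inE.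
  by apply: eq_bigl => j; rewrite !inE.
pose PS (S : {set I}) := (Y \subset S) && indepb S b.
have PY : PS Y by rewrite /PS subxx YS.
case: (arg_maxnP (fun S : {set I} => #|S|) PY) => S /andP [YsubS /indepbP indS] maxS.
have Gex : forall q : I, exists g : I -> F, (forall p, p \in S -> fr e (g p) = g p) /\
    b q = \sum_(p in S) g p * b p /\ (q \in S -> forall p, g p = (p == q)%:R).
  move=> q; case: (boolP (q \in S)) => qS.
    exists (fun p => (p == q)%:R); split; first by move=> p _; case: (p == q); rewrite ?fr0 ?fr1.
    split=> // ; rewrite (big_setD1 q) //= eqxx mul1r big1 ?addr0 // => p.
    by rewrite !inE => /andP [/negbTE -> _]; rewrite mul0r.
  have nind : ~~ indepb (q |: S) b.
    apply/negP => H; have := maxS (q |: S); rewrite /PS H andbT.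
    have -> : Y \subset q |: S by apply: subset_trans YsubS (subsetUr _ _).
    by rewrite cardsU1 qS /= add1n ltnn => /(_ isT).
  have [g [gK gE]] := span_or_indep indS qS nind.
  by exists g; split=> //; split=> //; rewrite (negbTE qS).
have [G HG] := fin_all_exists Gex.
have GK q p : p \in S -> fr e (G q p) = G q p by case: (HG q) => H _; apply: H.
have GE q : b q = \sum_(p in S) G q p * b p by case: (HG q) => _ [].
have GS q : q \in S -> forall p, G q p = (p == q)%:R by case: (HG q) => _ [].
have inlS i : inl i \in S by apply: (subsetP YsubS); rewrite inE.
have M : forall p, p \in S -> \sum_q a q * G q p = 0.
  apply: (moore (N := u + u) (k0 := k0) (b := b)) => //.
    by apply: leq_trans (max_card _) _; rewrite card_sum card_ord.
  move=> k Hk.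
  have := Heq k Hk; rewrite big_split /= => E.
  have E' : \sum_q a q * fr (d * k) (b q) = 0.
    rewrite big_sumType /= -[RHS]E; congr (_ + _); apply: eq_bigr => i _; exact: mulrC.
  rewrite -[RHS]E'; under [RHS]eq_bigr => q _ do rewrite [b q]GE (fr_sum cardF) mulr_sumr.
  rewrite exchange_big /=; apply: eq_bigr => p pS; rewrite mulr_suml.
  by apply: eq_bigr => q _; rewrite frM [fr _ (G q p)]frK ?GK // mulrA.
pose A i l := G (inr i) (inl l).
have Minr j : inr j \in S -> forall i, G (inr i) (inr j) = 0.
  move=> jS; have := M _ jS; rewrite big_sumType /=.
  rewrite big1 ?add0r => [|i _]; last by rewrite GS // mulr0.
  move=> H i; apply: (Hy (fun i => G (inr i) (inr j))) => // [r _|]; first exact: GK.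
  by rewrite -[RHS]H; apply: eq_big => [r|r _]; [rewrite inE | exact: mulrC].
have Minl l : x l = \sum_i A i l * y i.
  have := M _ (inlS l); rewrite big_sumType /= (bigD1 l) //= GS // eqxx mulr1.
  rewrite big1 ?addr0 => [|i il]; last first.
    by rewrite GS // inj_eq; [rewrite eq_sym (negbTE il) mulr0 | move=> ? ? [] ].
  move/eqP; rewrite addr_eq0 => /eqP ->; rewrite (c2_opp (two0F cardF)).
  by apply: eq_bigr => i _; rewrite mulrC.
have Ex i : x i = \sum_l A i l * y l.
  have := GE (inr i); rewrite /= => ->.
  rewrite (big_sumType _ (fun p => p \in S)) /= [X in _ + X]big1 ?addr0 => [|j jS]; last first.
    by rewrite Minr // mul0r.
  by apply: eq_bigl => l; rewrite inlS.
exists A; split; first by move=> i l; apply: GK.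
split=> // i l.
apply/eqP; rewrite -subr_eq0; apply/eqP.
have := Hy (fun r => A r l - A l r); apply.
- by move=> r _; rewrite (frB cardF) !GK.
- transitivity (\sum_r A r l * y r - \sum_r A l r * y r); last by rewrite -Minl -Ex subrr.
  by rewrite -sumrB; apply: eq_big => [r|r _]; [rewrite inE | exact: mulrBl].
- by [].
Qed.


Hypothesis e_gt0 : (0 < e)%N.

Definition indT r (y : 'I_r -> F) := forall c : 'I_r -> F, (forall i, fr e (c i) = c i) ->
  \sum_i c i * y i = 0 -> forall i, c i = 0.

Lemma indT_indep r (y : 'I_r -> F) : indT y <-> indep [set: 'I_r] y.
Proof.
split=> H c cK c0.
  move=> i _; apply: H; first by move=> j; apply: cK; rewrite inE.
  by rewrite -[RHS]c0; apply: eq_bigl => j; rewrite inE.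
move=> i; apply: H; last by rewrite inE.
  by move=> j _; exact: cK.
by rewrite -[RHS]c0; apply: eq_bigl => j; rewrite inE.
Qed.

Lemma indTP r (y : {ffun 'I_r -> F}) : reflect (indT y) (indepb [set: 'I_r] y).
Proof. by apply: (iffP (indepbP _ _)) => /indT_indep. Qed.

Lemma indT_eq r (y1 y2 : 'I_r -> F) : y1 =1 y2 -> indT y1 -> indT y2.
Proof.
move=> E H c cK c0; apply: H => //; rewrite -[RHS]c0; apply: eq_bigr => i _; by rewrite E.
Qed.

Lemma inKset c : (c \in Kset F e) = (fr e c == c).
Proof. by rewrite inE. Qed.

Definition spanS r (y : 'I_r -> F) : {set F} :=
  [set (\sum_i c i * y i) | c : {ffun 'I_r -> F} in ffun_on (Kset F e)].

Lemma card_span r (y : 'I_r -> F) : indT y -> #|spanS y| = ((2 ^ e) ^ r)%N.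
Proof.
move=> Hy; rewrite card_in_imset.
  by rewrite card_ffun_on (card_Kset cardF m_gt0 e_gt0 e_dvd_m') card_ord.
move=> c1 c2 /ffun_onP H1 /ffun_onP H2 E; apply/ffunP => i.
apply/eqP; rewrite -subr_eq0; apply/eqP; apply: (Hy (fun i => c1 i - c2 i)).
  by move=> j; rewrite (frB cardF); move: (H1 j) (H2 j); rewrite !inKset => /eqP -> /eqP ->.
by under eq_bigr => j _ do rewrite mulrBl; rewrite sumrB E subrr.
Qed.

Lemma lift_widen r (j : 'I_r) : lift ord_max j = widen_ord (leqnSn r) j.
Proof. by apply: val_inj; rewrite /= /bump leqNgt ltn_ord. Qed.

Definition extf r (y : 'I_r -> F) (z : F) (i : 'I_r.+1) : F :=
  if unlift ord_max i is Some j then y j else z.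

Lemma ext_sum r (y : 'I_r -> F) z (g : 'I_r.+1 -> F) :
  \sum_i g i * extf y z i = \sum_(j < r) g (lift ord_max j) * y j + g ord_max * z.
Proof.
rewrite big_ord_recr /= /extf unlift_none; congr (_ + _); apply: eq_bigr => j _.
by rewrite -lift_widen liftK.
Qed.

Lemma indT_ext r (y : 'I_r -> F) z : indT (extf y z) <-> indT y /\ z \notin spanS y.
Proof.
split.
  move=> H; split.
    move=> c cK c0 j.
    pose c' := fun i => if unlift ord_max i is Some j then c j else 0.
    suff: c' (lift ord_max j) = 0 by rewrite /c' /= liftK.
    apply: (H c').
      move=> i; rewrite /c'; case: (unlift ord_max i) => [k|]; [exact: cK | exact: fr0].
    rewrite ext_sum /c' unlift_none mul0r addr0 -[RHS]c0; apply: eq_bigr => k _; by rewrite liftK.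
  apply/negP => /imsetP [c /ffun_onP cK Ez].
  pose c' := fun i => if unlift ord_max i is Some j then c j else -1.
  have : c' ord_max = 0.
    apply: (H c').
      move=> i; rewrite /c'; case: (unlift ord_max i) => [k|]; last by rewrite (frN cardF) fr1.
      by move: (cK k); rewrite inKset => /eqP.
    rewrite ext_sum /c' unlift_none Ez; under eq_bigr => k _ do rewrite liftK.
    by rewrite mulN1r subrr.
  by rewrite /c' /= unlift_none => /eqP; rewrite oppr_eq0 oner_eq0.
move=> [Hy zS] c cK c0.
have cm : c ord_max = 0.
  apply/eqP; apply/negPn/negP => cm; move/negP: zS; apply.
  apply/imsetP; exists [ffun j => - c (lift ord_max j) / c ord_max].
    apply/ffun_onP => j; rewrite ffunE inKset frM (frN cardF) frV !cK //.
  move: c0; rewrite ext_sum addrC => /eqP; rewrite addr_eq0 => /eqP E.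
  have -> : z = (c ord_max * z) / c ord_max by rewrite mulrC mulrA mulVf // mul1r.
  rewrite E mulNr mulr_suml -sumrN; apply: eq_bigr => j _.
  by rewrite ffunE !mulNr mulrAC.
have cw : forall j, c (lift ord_max j) = 0.
  apply: (Hy (fun j => c (lift ord_max j))) => // .
  by move: c0; rewrite ext_sum cm mul0r addr0.
move=> i; case: (unliftP ord_max i) => [j ->|->] //; exact: cw.
Qed.


Definition NI r := #|[set y : {ffun 'I_r -> F} | indepb [set: 'I_r] y]|.

Lemma card_pair (T1 T2 : finType) (P : pred T1) (Q : T1 -> pred T2) :
  #|[set p : T1 * T2 | P p.1 && Q p.1 p.2]| = (\sum_(a | P a) #|[set b | Q a b]|)%N.
Proof.
rewrite -sum1_card (eq_bigl (fun p => P p.1 && Q p.1 p.2)) => [|p]; last by rewrite inE.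
rewrite -(pair_big_dep P Q (fun _ _ => 1%N)) /=; apply: eq_bigr => a _.
by rewrite -sum1_card; apply: eq_bigl => b; rewrite inE.
Qed.

Lemma NI_S r : NI r.+1 =
  (\sum_(y : {ffun 'I_r -> F} | indepb [set: 'I_r] y) #|~: spanS y|)%N.
Proof.
pose ext2 (p : {ffun 'I_r -> F} * F) : {ffun 'I_r.+1 -> F} := [ffun i => extf p.1 p.2 i].
pose res (y : {ffun 'I_r.+1 -> F}) := ([ffun j => y (lift ord_max j)], y ord_max).
have K1 : cancel res ext2.
  move=> y; apply/ffunP => i; rewrite ffunE /extf /=.
  by case: (unliftP ord_max i) => [j ->|->]; rewrite ?liftK ?unlift_none ?ffunE.
have K2 : cancel ext2 res.
  case=> y z; rewrite /res /= ffunE /extf unlift_none; congr pair; apply/ffunP => j; by rewrite !ffunE /extf /= liftK.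
rewrite /NI -(card_imset _ (can_inj K1)).
have -> : res @: [set y : {ffun 'I_r.+1 -> F} | indepb [set: 'I_r.+1] y] =
   [set p : {ffun 'I_r -> F} * F | indepb [set: 'I_r] p.1 && (p.2 \notin spanS p.1)].
  apply/setP => p; rewrite inE; apply/imsetP/idP.
    move=> [y]; rewrite inE => /indTP H ->; apply/andP.
    have := H; rewrite -{1}(K1 y) => H'.
    have [H1 H2] : indT (res y).1 /\ (res y).2 \notin spanS (res y).1.
      by apply/indT_ext; apply: (indT_eq _ H') => i; rewrite ffunE.
    by split => //; apply/indTP.
  move=> /andP [/indTP H1 H2]; exists (ext2 p); last by rewrite K2.
  rewrite inE; apply/indTP; apply: (indT_eq (y1 := extf p.1 p.2)); first by move=> i; rewrite ffunE.
  by apply/indT_ext.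
by rewrite (card_pair (fun y : {ffun 'I_r -> F} => indepb [set: 'I_r] y) (fun y z => z \notin spanS y)); apply: eq_bigr => y _; congr #|_|; apply/setP => z; rewrite !inE.
Qed.

Lemma NI_rec r : (NI r.+1 : int) = (NI r : int) * (((2 ^ m)%N : int) - (((2 ^ e) ^ r)%N : int)).
Proof.
rewrite NI_S.
have Ec : forall y : {ffun 'I_r -> F}, indepb [set: 'I_r] y ->
    #|~: spanS y| = ((2 ^ m) - (2 ^ e) ^ r)%N.
  move=> y /indTP Hy; have := cardsC (spanS y); rewrite card_span // cardF; lia.
rewrite (eq_bigr _ Ec) sum_nat_const.
have -> : #|[pred y : {ffun 'I_r -> F} | indepb [set: 'I_r] y]| = NI r.
  by rewrite /NI; apply: eq_card => y; rewrite inE.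
case: (posnP (NI r)) => [->|NIp]; first by rewrite !mul0n mul0r.
have [y] : exists y, y \in [set y : {ffun 'I_r -> F} | indepb [set: 'I_r] y].
  by apply/set0Pn; rewrite -card_gt0.
rewrite inE => /indTP Hy.
have le : ((2 ^ e) ^ r <= 2 ^ m)%N by rewrite -(card_span Hy) -cardF max_card.
by rewrite PoszM subzn.
Qed.

Lemma NI_prod r : (NI r : int) = \prod_(i < r) (((2 ^ m)%N : int) - ((2 ^ (e * i))%N : int)).
Proof.
elim: r => [|r IH].
  rewrite big_ord0 /NI.
  have -> : [set y : {ffun 'I_0 -> F} | indepb [set: 'I_0] y] = [set: {ffun 'I_0 -> F}].
    by apply/setP => y; rewrite !inE; apply/indTP => c _ _ [].
  by rewrite cardsT card_ffun card_ord expn0.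
by rewrite NI_rec IH big_ord_recr /= expnM.
Qed.

End Moore.

Section Final.
Variables (F : finFieldType) (m n d e s u : nat).
Hypothesis cardF : #|F| = (2 ^ m)%N.
Hypothesis m_gt0 : (0 < m)%N.
Hypothesis n_gt0 : (0 < n)%N.
Hypothesis e_gt0 : (0 < e)%N.
Hypothesis Hm : m = (2 * n)%N.
Hypothesis Hen : e = gcdn n d.
Hypothesis He : e = gcdn m d.
Hypothesis us : (u <= s)%N.

Definition Tj (j : nat) : int := (((n %/ e)%N : int) - (j : int)) * (d : int).

Definition eqsP (o v : 'I_u -> F) : bool :=
  [forall j : 'I_s.+1, \sum_(i < u) (o i * frob2 m (Tj j) (v i) + frob2 m (Tj j) (o i) * v i) == 0].

Lemma frob2_K (a : int) (c : F) : (e %| a)%Z -> fr e c = c -> frob2 m a c = c.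
Proof.
move=> ea Hc; rewrite frob2E.
have E := divz_eq a m; set q := (a %/ m)%Z in E; set r := (a %% m)%Z in E *.
have Er : r = a - q * m by rewrite {1}E; ring.
have : (e %| r)%Z.
  have /dvdzP [qm Em] : ((e : int) %| (m : int))%Z by rewrite dvdzE !absz_nat He dvdn_gcdl.
  move/dvdzP: ea => [qa Ea].
  by apply/dvdzP; exists (qa - q * qm); rewrite Er {1}Ea Em; ring.
rewrite dvdzE /= => /dvdnP [k ->]; rewrite mulnC; exact: fr_fix_mul.
Qed.

Lemma e_dvd_Tj j : (e %| Tj j)%Z.
Proof. by rewrite /Tj; apply: dvdz_mull; rewrite dvdzE !absz_nat He dvdn_gcdr. Qed.

Lemma sym_sol (A : 'I_u -> 'I_u -> F) (v : 'I_u -> F) (b : nat) :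
  (forall i l, fr b (A i l) = A i l) -> (forall i l, A i l = A l i) ->
  \sum_i ((\sum_l A i l * v l) * fr b (v i) + fr b (\sum_l A i l * v l) * v i) = 0.
Proof.
move=> KA As.
rewrite big_split /=.
have -> : \sum_i fr b (\sum_l A i l * v l) * v i = \sum_i (\sum_l A i l * v l) * fr b (v i).
  transitivity (\sum_i \sum_l A i l * fr b (v l) * v i).
    apply: eq_bigr => i _; rewrite (fr_sum cardF) mulr_suml; apply: eq_bigr => l _.
    by rewrite frM KA.
  rewrite exchange_big /=; apply: eq_bigr => l _; rewrite mulr_suml; apply: eq_bigr => i _.
  by rewrite (As i l) mulrAC.
exact: (c2_addrr (two0F cardF)).
Qed.

Lemma fib_k (o v : 'I_u -> F) : eqsP o v ->
  forall k, ((n %/ e) + s * (2 * (n %/ e).-1 + 1) <= k < (n %/ e) + s * (2 * (n %/ e).-1 + 1) + (u + u))%N ->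
  \sum_i (o i * fr (d * k) (v i) + fr (d * k) (o i) * v i) = 0.
Proof.
move=> /forallP H k.
have en : (e %| n)%N by rewrite Hen dvdn_gcdl.
have ed : (e %| d)%N by rewrite Hen dvdn_gcdr.
have n'gt0 : (0 < n %/ e)%N by rewrite divn_gt0 // dvdn_leq.
set n' := (n %/ e)%N in n'gt0 *; set n'' := n'.-1.
have En' : n' = (n'' + 1)%N by rewrite addn1 prednK.
set k0 := (n' + s * (2 * n'' + 1))%N.
move=> /andP [k1 k2].
set t := (k - k0)%N.
have Ek : k = (k0 + t)%N by rewrite subnKC.
have Hn : n = (n' * e)%N by rewrite divnK.
have Hd : d = ((d %/ e) * e)%N by rewrite divnK.
set d' := (d %/ e)%N in Hd.
case: (leqP t s) => ts.
  have jlt : (s - t < s.+1)%N by lia.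
  have := eqP (H (Ordinal jlt)) => Ej.
  rewrite -[RHS]Ej; apply: eq_bigr => i _.
  have Eq (z : F) : frob2 m (Tj (Ordinal jlt)) z = fr (d * k) z.
    rewrite -(frob2_nat cardF); apply: frob2_cong; apply/dvdzP.
    exists (- ((s * d')%N : int)).
    rewrite /Tj /= -/n' Hm Hn Ek /k0 Hd En' -(subzn ts).
    rewrite !PoszM !PoszD !PoszM; ring.
  by rewrite !Eq.
have jlt : (t - s < s.+1)%N by lia.
have := eqP (H (Ordinal jlt)) => Ej.
have := congr1 (fr (d * k)) Ej; rewrite fr0 (fr_sum cardF) => E'.
rewrite -[RHS]E'; apply: eq_bigr => i _; rewrite (frD cardF) !frM.
have Eq (z : F) : fr (d * k) (frob2 m (Tj (Ordinal jlt)) z) = z.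
  rewrite -(frob2_nat cardF) (frob2_comp cardF m_gt0) -[RHS](frob2_0 cardF z).
  apply: frob2_cong; apply/dvdzP.
  exists (((s + 1) * d')%N : int).
  rewrite /Tj /= -/n' Hm Hn Ek /k0 Hd En' subr0 -(subzn (ltnW ts)).
  rewrite !PoszM !PoszD !PoszM; ring.
by rewrite !Eq addrC.
Qed.


Definition Dup : {set 'I_u * 'I_u} := [set p : 'I_u * 'I_u | (p.1 <= p.2)%N].

Lemma pffunE (g : {ffun 'I_u * 'I_u -> F}) :
  g \in pffun_on (0 : F) Dup (Kset F e) <->
  (forall p, p \in Dup -> fr e (g p) = g p) /\ (forall p, p \notin Dup -> g p = 0).
Proof.
split.
  move/pffun_onP => [sub im]; split.
    by move=> p pD; apply/eqP; rewrite -inKset; apply: im; apply: image_f.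
  move=> p pD; apply/eqP; apply/negPn/negP => gp.
  by move/negP: pD; apply; apply: (subsetP sub); rewrite inE.
move=> [H1 H2]; apply/pffun_onP; split.
  apply/subsetP => p; rewrite inE; apply: contraR => pD; rewrite H2 //.
by move=> z /imageP [p pD ->]; rewrite inKset H1.
Qed.

Definition Amat (g : {ffun 'I_u * 'I_u -> F}) (i l : 'I_u) : F :=
  if (i <= l)%N then g (i, l) else g (l, i).

Lemma Amat_sym g i l : Amat g i l = Amat g l i.
Proof.
rewrite /Amat; case: (leqP i l) => il; case: (leqP l i) => li //; last by lia.
have E : i = l by apply: val_inj; apply: anti_leq; rewrite il li.
by rewrite E.
Qed.

Lemma Amat_K g i l : g \in pffun_on (0 : F) Dup (Kset F e) -> fr e (Amat g i l) = Amat g i l.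
Proof.
move=> /pffunE [H1 _]; rewrite /Amat; case: (leqP i l) => il; apply: H1; rewrite inE //=.
exact: ltnW.
Qed.

Lemma fib_card (v : 'I_u -> F) : indT e v ->
  #|[set o : {ffun 'I_u -> F} | eqsP o v]| = ((2 ^ e) ^ #|Dup|)%N.
Proof.
move=> Hv.
pose Phi (g : {ffun 'I_u * 'I_u -> F}) := [ffun i => \sum_l Amat g i l * v l].
have -> : [set o : {ffun 'I_u -> F} | eqsP o v] = Phi @: pffun_on (0 : F) Dup (Kset F e).
  apply/setP => o; rewrite inE; apply/idP/imsetP.
    move=> Ho.
    have [A [AK [As Ao]]] := fiber_sym cardF m_gt0 He (proj1 (indT_indep _ _) Hv) (fib_k Ho).
    exists [ffun p : 'I_u * 'I_u => if (p.1 <= p.2)%N then A p.1 p.2 else 0].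
      apply/pffunE; split=> p; rewrite inE ffunE; [by move=> ->; apply: AK | by move/negbTE ->].
    apply/ffunP => i; rewrite !ffunE Ao; apply: eq_bigr => l _; congr (_ * _).
    rewrite /Amat; case: (leqP i l) => il; rewrite ffunE /=; first by rewrite il.
    by rewrite (ltnW il) As.
  move=> [g gD ->]; apply/forallP => j; apply/eqP.
  set b := `|(Tj j %% m)%Z|%N.
  have KA : forall i l, fr b (Amat g i l) = Amat g i l.
    move=> i l; rewrite /b -frob2E; apply: frob2_K; first exact: e_dvd_Tj.
    exact: Amat_K.
  rewrite -[RHS](sym_sol v KA (@Amat_sym g)); apply: eq_bigr => i _.
  by rewrite /Phi ffunE.
rewrite card_in_imset.
  by rewrite card_pffun_on (card_Kset cardF m_gt0 e_gt0 (e_dvd_m' He)).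
move=> g1 g2 /[dup] g1D /pffunE [_ H1] /[dup] g2D /pffunE [_ H2] E.
have EA i l : Amat g1 i l = Amat g2 i l.
  apply/eqP; rewrite -subr_eq0; apply/eqP; move: l.
  apply: (Hv (fun l => Amat g1 i l - Amat g2 i l)).
    by move=> l; rewrite (frB cardF) !Amat_K.
  under eq_bigr => l _ do rewrite mulrBl.
  by rewrite sumrB; move/ffunP: E => /(_ i); rewrite !ffunE => ->; rewrite subrr.
apply/ffunP => [[i l]]; case: (leqP i l) => il.
  by have := EA i l; rewrite /Amat il.
by rewrite H1 ?H2 // inE -ltnNge.
Qed.

Lemma sum_le_card (a : nat) : forall r, (\sum_(i < r) (a <= i)%N)%N = (r - a)%N.
Proof.
elim=> [|r IH]; first by rewrite big_ord0.
rewrite big_ord_recr /= IH; case: (leqP a r) => ar; lia.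
Qed.

Lemma tri_sum r : ((\sum_(a < r) (r - a)) * 2 = r * r.+1)%N.
Proof.
elim: r => [|r IH]; first by rewrite big_ord0.
rewrite big_ord_recr /= subSnn.
rewrite (eq_bigr (fun a : 'I_r => (r - a) + 1)%N) => [|a _]; last by rewrite addn1 subSn // ltnW.
rewrite big_split /= big_const_ord iter_addn_0 mul1n mulnDl mulnDl IH; lia.
Qed.

Lemma card_Dup : (#|Dup| * 2)%N = (u * u.+1)%N.
Proof.
have -> : #|Dup| = (\sum_(a < u) (u - a))%N.
  rewrite -sum1_card (eq_bigl (fun p : 'I_u * 'I_u => true && (p.1 <= p.2)%N)) => [|p]; last by rewrite inE.
  rewrite -(pair_big_dep xpredT (fun a b : 'I_u => (a <= b)%N) (fun _ _ => 1%N)) /=.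
  apply: eq_bigr => a _; rewrite -(sum_le_card a u) big_mkcond /=.
  by apply: eq_bigr => b _; case: ifP.
exact: tri_sum.
Qed.


Lemma eqsP_ext (o1 o2 v1 v2 : 'I_u -> F) : o1 =1 o2 -> v1 =1 v2 -> eqsP o1 v1 = eqsP o2 v2.
Proof.
move=> Eo Ev; apply: eq_forallb => j; congr (_ == _); apply: eq_bigr => i _.
by rewrite Eo Ev.
Qed.

Lemma half_lt (k : 'I_(2 * u)) : (k %/ 2 < u)%N.
Proof. rewrite ltn_divLR //; have := ltn_ord k; lia. Qed.

Definition mk (v o : 'I_u -> F) : {ffun 'I_(2 * u) -> F} :=
  [ffun k : 'I_(2 * u) => if odd k then v (Ordinal (half_lt k)) else o (Ordinal (half_lt k))].

Lemma xodd_mk v o : xodd (mk v o) =1 o.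
Proof.
move=> i; rewrite /xodd ffunE /= oddM /=; congr o; apply: val_inj => /=.
by rewrite mulKn.
Qed.

Lemma xeven_mk v o : xeven (mk v o) =1 v.
Proof.
move=> i; rewrite /xeven ffunE /= (_ : odd (2 * i + 1) = true); last by rewrite addn1 /= oddM.
congr v; apply: val_inj => /=.
lia.
Qed.

Lemma ord2_cases (k : 'I_(2 * u)) :
  exists i : 'I_u, k = Ordinal (ord_odd_lt i) \/ k = Ordinal (ord_even_lt i).
Proof.
exists (Ordinal (half_lt k)).
have E := divn_eq k 2; have L := ltn_pmod k (isT : (0 < 2)%N).
case: (leqP (k %% 2) 0) => H; [left | right]; apply: val_inj => /=; lia.
Qed.

Lemma indep_subP (x : {ffun 'I_(2 * u) -> F}) : reflect (indT e (xeven x)) (indep_sub e x).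
Proof.
apply: (iffP forallP) => [H c cK c0 i | H c].
  have := H [ffun q => c q].
  have -> : [forall i, [ffun q => c q] i ^+ (2 ^ e) == [ffun q => c q] i].
    by apply/forallP => q; rewrite ffunE; apply/eqP; exact: cK.
  have -> : \sum_(i < u) [ffun q => c q] i * xeven x i == 0.
    by rewrite -[X in _ == X]c0; apply/eqP/eq_bigr => q _; rewrite ffunE.
  by move=> /forallP /(_ i); rewrite ffunE => /eqP.
apply/implyP => /andP [/forallP cK /eqP c0]; apply/forallP => i.
by apply/eqP; apply: (H c) => // q; apply/eqP/cK.
Qed.

Lemma card_V0 : (#|V0 F m n d e s u| : int) =
    ((2 ^ (e * u * (u + 1) %/ 2))%N : int) *
    \prod_(i < u) (((2 ^ m)%N : int) - ((2 ^ (e * i))%N : int)).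
Proof.
pose h (x : {ffun 'I_(2 * u) -> F}) := ([ffun i => xeven x i], [ffun i => xodd x i]).
have hinj : injective h.
  move=> x1 x2 [/ffunP E1 /ffunP E2]; apply/ffunP => k.
  have [i [->|->]] := ord2_cases k.
    by have := E2 i; rewrite !ffunE.
  by have := E1 i; rewrite !ffunE.
rewrite -(card_imset _ hinj).
have -> : h @: V0 F m n d e s u = [set p : {ffun 'I_u -> F} * {ffun 'I_u -> F} |
     indepb e [set: 'I_u] p.1 && eqsP p.2 p.1].
  apply/setP => [[v o]]; rewrite inE /=; apply/imsetP/idP.
    move=> [x]; rewrite inE => /andP [Hin /indep_subP Hind] [-> ->]; apply/andP; split.
      by apply/indTP; apply: (indT_eq _ Hind) => i; rewrite ffunE.
    by rewrite (@eqsP_ext _ (xodd x) _ (xeven x)) // => i; rewrite ffunE.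
  move=> /andP [/indTP H1 H2]; exists (mk v o).
    rewrite inE; apply/andP; split.
      by rewrite /inV -/(eqsP _ _) (eqsP_ext (xodd_mk v o) (xeven_mk v o)).
    by apply/indep_subP; apply: (indT_eq _ H1) => i; rewrite xeven_mk.
  by rewrite /h; congr pair; apply/ffunP => i; rewrite ffunE ?xodd_mk ?xeven_mk.
rewrite (card_pair (fun v : {ffun 'I_u -> F} => indepb e [set: 'I_u] v) (fun (v : {ffun 'I_u -> F}) (o : {ffun 'I_u -> F}) => eqsP o v)).
rewrite (eq_bigr (fun _ => ((2 ^ e) ^ #|Dup|)%N)) => [|v /indTP Hv]; last first.
  by rewrite -(fib_card Hv); congr #|_|; apply/setP => o; rewrite !inE.
rewrite sum_nat_const.
have -> : #|[pred v : {ffun 'I_u -> F} | indepb e [set: 'I_u] v]| = NI F e u.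
  by rewrite /NI; apply: eq_card => y; rewrite inE.
rewrite PoszM (NI_prod cardF m_gt0 He e_gt0) mulrC; congr (_ * _); congr Posz.
rewrite -expnM; congr (2 ^ _)%N.
by rewrite -mulnA addn1 -card_Dup mulnA mulnK.
Qed.

End Final.

Theorem lemma6p2 (F : finFieldType) (m n d e s u : nat) :
  #|F| = (2 ^ m)%N ->
  (0 < m)%N -> (0 < n)%N -> (0 < d)%N -> (0 < e)%N ->
  m = (2 * n)%N -> e = gcdn n d -> e = gcdn m d ->
  (2 <= u)%N -> (u <= s)%N ->
  (#|V0 F m n d e s u| : int) =
    ((2 ^ (e * u * (u + 1) %/ 2))%N : int) *
    \prod_(i < u) (((2 ^ m)%N : int) - ((2 ^ (e * i))%N : int)).
Proof.
move=> cardF m_gt0 n_gt0 d_gt0 e_gt0 Hm Hen He _ us.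
exact: (card_V0 cardF m_gt0 n_gt0 e_gt0 Hm Hen He us).
Qed.
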